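(* Let $\theta\in[0,\frac\pi2]$ and let $\Omega_\theta\subset\mathbb{R}^2$ be a simply connected open set on which $\cos\theta\cosh u+\sin\theta\cos v\neq0$ (e.g. $\Omega_\theta=\mathbb{R}^2$ for $\theta\in[0,\frac\pi4)$). Define on $\Omega_\theta$, with $z=u+iv$, $$h(z)=e^{iz},\quad \mathcal{M}_\theta=\cos\theta\,\sinh u\sin u-\sin\theta\,\cos u\cos v,\quad \mathcal{N}_\theta=e^{v}\left(\cos\theta\cosh u+\sin\theta\sin v\right).$$ Then: (i) $(h,\mathcal{M}_\theta,\mathcal{N}_\theta)$ is a Weierstrass data of the second kind on $\Omega_\theta$; (ii) the map $\mathbf{X}_\theta:=\cos\theta\,\mathbf{X}_0+\sin\theta\,\mathbf{X}_{\pi/2}$, where $$\mathbf{X}_0(u,v)=(\sinh u\sin u,\ \sinh u\cos u,\ \cosh u\sinh v,\ \cosh u\cosh v)^T,\quad \mathbf{X}_{\pi/2}(u,v)=(-\cos u\cos v,\ \sin u\cos v,\ \cosh v\sin v,\ \sinh v\sin v)^T,$$ satisfies $(\mathbf{X}_\theta)_z=(\mathcal{M}_\theta)_z(1,-i,-h,h)^T+(\mathcal{N}_\theta)_z\big(0,ih,\tfrac12(1+h^2),\tfrac12(1-h^2)\big)^T$, and is a conformal spacelike immersion of $\Omega_\theta$ into $\mathbb{L}^4$ with induced metric $(\cos\theta\cosh u+\sin\theta\cos v)^2(du^2+dv^2)$; (iii) the mean curvature vector of $\mathbf{X}_\theta$ is null and vanishes nowhere on $\Omega_\theta$; (iv)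 $\mathbf{X}_\theta(\Omega_\theta)$ lies in the hypersurface $x_1^2+x_2^2+x_3^2-x_4^2=-\cos(2\theta)$.
   Context: $z=u+iv$, $\partial_z=\frac12(\partial_u-i\partial_v)$, $\partial_{\overline z}=\frac12(\partial_u+i\partial_v)$. $\mathbb{L}^4$ is $\mathbb{R}^4$ with the Lorentzian metric $\langle x,y\rangle=x_1y_1+x_2y_2+x_3y_3-x_4y_4$. For a conformal spacelike immersion $\mathbf{X}$ with induced metric $\Lambda(du^2+dv^2)$, the mean curvature vector is $\mathbf{H}=\frac{1}{\Lambda}(\mathbf{X}_{uu}+\mathbf{X}_{vv})$. A Weierstrass data of the second kind on $\Omega$ is a triple $(h,\mathcal{M},\mathcal{N})$ where $h:\Omega\to\mathbb{C}\setminus\{0\}$ and $\mathcal{M},\mathcal{N}:\Omega\to\mathbb{R}$ are $\mathcal{C}^2$, satisfying $h_{\overline z}=0$, $\mathcal{M}_{z\overline z}=(\mathrm{Re}\,h)\,\mathcal{N}_{z\overline z}$, and $\mathcal{M}_z-(\mathrm{Re}\,h)\,\mathcal{N}_z\neq0$ at every point of $\Omega$. *)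

(* Defs.v *)
From Stdlib Require Import Reals.
From Coquelicot Require Export Coquelicot.
Open Scope R_scope.

Definition Pu (f : R -> R -> R) (u v : R) : R := Derive (fun t => f t v) u.
Definition Pv (f : R -> R -> R) (u v : R) : R := Derive (fun t => f u t) v.

Definition cont2 (f : R -> R -> R) (u v : R) : Prop :=
  continuous (fun p : R * R => f (fst p) (snd p)) (u, v).

Definition C1_on (Om : R * R -> Prop) (f : R -> R -> R) : Prop :=
  forall u v, Om (u, v) ->
    ex_derive (fun t => f t v) u /\ ex_derive (fun t => f u t) v /\
    cont2 f u v /\ cont2 (Pu f) u v /\ cont2 (Pv f) u v.

Definition C2_on (Om : R * R -> Prop) (f : R -> R -> R) : Prop :=
  C1_on Om f /\ C1_on Om (Pu f) /\ C1_on Om (Pv f).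

Definition C2_on_C (Om : R * R -> Prop) (f : R -> R -> C) : Prop :=
  C2_on Om (fun a b => Re (f a b)) /\ C2_on Om (fun a b => Im (f a b)).

Definition liftR (f : R -> R -> R) : R -> R -> C := fun u v => RtoC (f u v).

Definition CDu (f : R -> R -> C) (u v : R) : C :=
  (Pu (fun a b => Re (f a b)) u v, Pu (fun a b => Im (f a b)) u v).
Definition CDv (f : R -> R -> C) (u v : R) : C :=
  (Pv (fun a b => Re (f a b)) u v, Pv (fun a b => Im (f a b)) u v).

Definition Dz (f : R -> R -> C) (u v : R) : C :=
  (/ 2 * (CDu f u v - Ci * CDv f u v))%C.
Definition Dzb (f : R -> R -> C) (u v : R) : C :=
  (/ 2 * (CDu f u v + Ci * CDv f u v))%C.

(** * Simply connected open sets of R^2.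
    Paths / homotopies are maps continuous at every point of [0,1] (resp. [0,1]^2);
    by clamping, this is equivalent to continuity of the restriction. *)
Definition simply_connected (Om : R * R -> Prop) : Prop :=
  (forall p q, Om p -> Om q ->
     exists g : R -> R * R, g 0 = p /\ g 1 = q /\
       (forall t, 0 <= t <= 1 -> continuous g t /\ Om (g t))) /\
  (forall g : R -> R * R, g 0 = g 1 ->
     (forall t, 0 <= t <= 1 -> continuous g t /\ Om (g t)) ->
     exists H : R * R -> R * R,
       (forall s t, 0 <= s <= 1 -> 0 <= t <= 1 -> continuous H (s, t) /\ Om (H (s, t))) /\
       (forall t, 0 <= t <= 1 -> H (0, t) = g t /\ H (1, t) = g 0) /\
       (forall s, 0 <= s <= 1 -> H (s, 0) = g 0 /\ H (s, 1) = g 0)).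

Definition weierstrass_data_2 (Om : R * R -> Prop) (h : R -> R -> C)
    (M N : R -> R -> R) : Prop :=
  C2_on_C Om h /\ C2_on Om M /\ C2_on Om N /\
  forall u v, Om (u, v) ->
    h u v <> RtoC 0 /\
    Dzb h u v = RtoC 0 /\
    Dz (Dzb (liftR M)) u v = (RtoC (Re (h u v)) * Dz (Dzb (liftR N)) u v)%C /\
    (Dz (liftR M) u v - RtoC (Re (h u v)) * Dz (liftR N) u v)%C <> RtoC 0.

(** * Lorentz–Minkowski space L^4: vectors are component maps nat -> R,
      components 0,1,2,3 standing for x1,x2,x3,x4. *)
Definition lor (a b : nat -> R) : R :=
  a 0%nat * b 0%nat + a 1%nat * b 1%nat + a 2%nat * b 2%nat - a 3%nat * b 3%nat.

Definition Xu (X : nat -> R -> R -> R) (u v : R) : nat -> R := fun i => Pu (X i) u v.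
Definition Xv (X : nat -> R -> R -> R) (u v : R) : nat -> R := fun i => Pv (X i) u v.

Definition conformal_spacelike_immersion (Om : R * R -> Prop)
    (X : nat -> R -> R -> R) (Lam : R -> R -> R) : Prop :=
  (forall i, (i < 4)%nat -> C2_on Om (X i)) /\
  forall u v, Om (u, v) ->
    0 < Lam u v /\
    lor (Xu X u v) (Xu X u v) = Lam u v /\
    lor (Xv X u v) (Xv X u v) = Lam u v /\
    lor (Xu X u v) (Xv X u v) = 0.

Definition mean_curv (X : nat -> R -> R -> R) (Lam : R -> R -> R) (u v : R) : nat -> R :=
  fun i => / Lam u v * (Pu (Pu (X i)) u v + Pv (Pv (X i)) u v).

(** h(z) = e^{iz} = e^{-v} (cos u + i sin u), z = u + iv *)
Definition hfun (u v : R) : C := (exp (- v) * cos u, exp (- v) * sin u).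

Definition Mth (th u v : R) : R :=
  cos th * sinh u * sin u - sin th * cos u * cos v.
Definition Nth (th u v : R) : R :=
  exp v * (cos th * cosh u + sin th * sin v).

Definition X0 (i : nat) (u v : R) : R :=
  match i with
  | 0%nat => sinh u * sin u
  | 1%nat => sinh u * cos u
  | 2%nat => cosh u * sinh v
  | _ => cosh u * cosh v
  end.
Definition Xpi2 (i : nat) (u v : R) : R :=
  match i with
  | 0%nat => - cos u * cos v
  | 1%nat => sin u * cos v
  | 2%nat => cosh v * sin v
  | _ => sinh v * sin v
  end.
Definition Xth (th : R) (i : nat) (u v : R) : R :=
  cos th * X0 i u v + sin th * Xpi2 i u v.

Definition Ecoef (h : C) (i : nat) : C :=
  match i with
  | 0%nat => RtoC 1
  | 1%nat => (- Ci)%C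
  | 2%nat => (- h)%C
  | _ => h
  end.
Definition Fcoef (h : C) (i : nat) : C :=
  match i with
  | 0%nat => RtoC 0
  | 1%nat => (Ci * h)%C
  | 2%nat => (/ 2 * (1 + h * h))%C
  | _ => (/ 2 * (1 - h * h))%C
  end.

Definition Lam_th (th u v : R) : R := (cos th * cosh u + sin th * cos v) ^ 2.

(* Main.v *)
From Stdlib Require Import Reals Lra FunctionalExtensionality.
From Coquelicot Require Import Coquelicot.
Require Import Defs.
Open Scope R_scope.

Lemma isd_mult (f g : R -> R) x df dg : is_derive f x df -> is_derive g x dg ->
  is_derive (fun t => f t * g t) x (df * g x + f x * dg).
Proof. intros H1 H2. apply (is_derive_mult f g); auto. intros; apply Rmult_comm. Qed.
Lemma isd_plus (f g : R -> R) x df dg : is_derive f x df -> is_derive g x dg ->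
  is_derive (fun t => f t + g t) x (df + dg).
Proof. intros H1 H2. apply (is_derive_plus f g); auto. Qed.
Lemma isd_const (a x : R) : is_derive (fun _ => a) x 0.
Proof. apply (is_derive_const a x). Qed.
Lemma isd_val (f : R -> R) x l l' : is_derive f x l -> l = l' -> is_derive f x l'.
Proof. intros H ->; exact H. Qed.

Inductive SP : (R -> R -> R) -> Prop :=
| SPc k : SP (fun _ _ => k)
| SPsinu : SP (fun u _ => sin u)
| SPcosu : SP (fun u _ => cos u)
| SPexpu : SP (fun u _ => exp u)
| SPexpnu : SP (fun u _ => exp (- u))
| SPsinv : SP (fun _ v => sin v)
| SPcosv : SP (fun _ v => cos v)
| SPexpv : SP (fun _ v => exp v)
| SPexpnv : SP (fun _ v => exp (- v))
| SPadd F G : SP F -> SP G -> SP (fun u v => F u v + G u v)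
| SPmul F G : SP F -> SP G -> SP (fun u v => F u v * G u v).

Lemma SP_ext F G : SP F -> (forall u v, F u v = G u v) -> SP G.
Proof. intros H E. replace G with F; auto. do 2 (apply functional_extensionality; intro). auto. Qed.

Lemma SPopp F : SP F -> SP (fun u v => - F u v).
Proof. intro H. apply (SP_ext (fun u v => (fun _ _ => -1) u v * F u v)).
  apply SPmul; auto; apply SPc. intros; simpl; ring. Qed.
Lemma SPsub F G : SP F -> SP G -> SP (fun u v => F u v - G u v).
Proof. intros H1 H2. apply (SP_ext (fun u v => F u v + (fun u v => - G u v) u v)).
  apply SPadd; auto; apply SPopp; auto. intros; simpl; ring. Qed.
Lemma SPsinhu : SP (fun u _ => sinh u).
Proof. apply (SP_ext (fun u v => (fun _ _ => /2) u v * ((fun u _ => exp u) u v - (fun u _ => exp (-u)) u v))).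
  apply SPmul; [apply SPc| apply SPsub; constructor]. intros; unfold sinh; simpl; field. Qed.
Lemma SPcoshu : SP (fun u _ => cosh u).
Proof. apply (SP_ext (fun u v => (fun _ _ => /2) u v * ((fun u _ => exp u) u v + (fun u _ => exp (-u)) u v))).
  apply SPmul; [apply SPc| apply SPadd; constructor]. intros; unfold cosh; simpl; field. Qed.
Lemma SPsinhv : SP (fun _ v => sinh v).
Proof. apply (SP_ext (fun u v => (fun _ _ => /2) u v * ((fun _ v => exp v) u v - (fun _ v => exp (-v)) u v))).
  apply SPmul; [apply SPc| apply SPsub; constructor]. intros; unfold sinh; simpl; field. Qed.
Lemma SPcoshv : SP (fun _ v => cosh v).
Proof. apply (SP_ext (fun u v => (fun _ _ => /2) u v * ((fun _ v => exp v) u v + (fun _ v => exp (-v)) u v))).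
  apply SPmul; [apply SPc| apply SPadd; constructor]. intros; unfold cosh; simpl; field. Qed.

Ltac sp := repeat first [ apply SPsinu | apply SPcosu | apply SPexpu | apply SPexpnu
  | apply SPsinv | apply SPcosv | apply SPexpv | apply SPexpnv | apply SPsinhu | apply SPcoshu
  | apply SPsinhv | apply SPcoshv | apply SPc | apply SPadd | apply SPsub | apply SPopp | apply SPmul ].

Lemma SP_du F : SP F -> exists G, SP G /\ forall u v, is_derive (fun t => F t v) u (G u v).
Proof.
  induction 1.
  - exists (fun _ _ => 0). split; [sp|]. intros; apply isd_const.
  - exists (fun u _ => cos u). split; [sp|]. intros; auto_derive; auto; ring.
  - exists (fun u _ => - sin u). split; [sp|]. intros; auto_derive; auto; ring.
  - exists (fun u _ => exp u). split; [sp|]. intros; auto_derive; auto; ring.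
  - exists (fun u _ => - exp (-u)). split; [sp|]. intros; auto_derive; auto; ring.
  - exists (fun _ _ => 0). split; [sp|]. intros; apply isd_const.
  - exists (fun _ _ => 0). split; [sp|]. intros; apply isd_const.
  - exists (fun _ _ => 0). split; [sp|]. intros; apply isd_const.
  - exists (fun _ _ => 0). split; [sp|]. intros; apply isd_const.
  - destruct IHSP1 as [G1 [S1 D1]]; destruct IHSP2 as [G2 [S2 D2]].
    exists (fun u v => G1 u v + G2 u v). split; [apply SPadd; auto|].
    intros; apply isd_plus; auto.
  - destruct IHSP1 as [G1 [S1 D1]]; destruct IHSP2 as [G2 [S2 D2]].
    exists (fun u v => G1 u v * G u v + F u v * G2 u v). split.
    + apply SPadd; apply SPmul; auto.
    + intros; apply (isd_mult (fun t => F t v) (fun t => G t v)); auto.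
Qed.

Lemma SP_dv F : SP F -> exists G, SP G /\ forall u v, is_derive (fun t => F u t) v (G u v).
Proof.
  induction 1.
  - exists (fun _ _ => 0). split; [sp|]. intros; apply isd_const.
  - exists (fun _ _ => 0). split; [sp|]. intros; apply isd_const.
  - exists (fun _ _ => 0). split; [sp|]. intros; apply isd_const.
  - exists (fun _ _ => 0). split; [sp|]. intros; apply isd_const.
  - exists (fun _ _ => 0). split; [sp|]. intros; apply isd_const.
  - exists (fun _ v => cos v). split; [sp|]. intros; auto_derive; auto; ring.
  - exists (fun _ v => - sin v). split; [sp|]. intros; auto_derive; auto; ring.
  - exists (fun _ v => exp v). split; [sp|]. intros; auto_derive; auto; ring.
  - exists (fun _ v => - exp (-v)). split; [sp|]. intros; auto_derive; auto; ring.
  - destruct IHSP1 as [G1 [S1 D1]]; destruct IHSP2 as [G2 [S2 D2]].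
    exists (fun u v => G1 u v + G2 u v). split; [apply SPadd; auto|].
    intros; apply (isd_plus (fun t => F u t) (fun t => G u t)); auto.
  - destruct IHSP1 as [G1 [S1 D1]]; destruct IHSP2 as [G2 [S2 D2]].
    exists (fun u v => G1 u v * G u v + F u v * G2 u v). split.
    + apply SPadd; apply SPmul; auto.
    + intros; apply (isd_mult (fun t => F u t) (fun t => G u t)); auto.
Qed.

Lemma Pu_eq F G : (forall u v, is_derive (fun t => F t v) u (G u v)) -> Pu F = G.
Proof. intro H. do 2 (apply functional_extensionality; intro). unfold Pu. apply is_derive_unique. auto. Qed.
Lemma Pv_eq F G : (forall u v, is_derive (fun t => F u t) v (G u v)) -> Pv F = G.
Proof. intro H. do 2 (apply functional_extensionality; intro). unfold Pv. apply is_derive_unique. auto. Qed.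

Lemma SP_Pu F : SP F -> SP (Pu F).
Proof. intro H. destruct (SP_du F H) as [G [S D]]. rewrite (Pu_eq F G D). auto. Qed.
Lemma SP_Pv F : SP F -> SP (Pv F).
Proof. intro H. destruct (SP_dv F H) as [G [S D]]. rewrite (Pv_eq F G D). auto. Qed.

Lemma cont_R (f : R -> R) x : (forall y, ex_derive f y) -> continuous f x.
Proof. intros H; apply (ex_derive_continuous (K:=R_AbsRing) (V:=R_NormedModule)); auto. Qed.

Lemma SP_cont F : SP F -> forall u v, cont2 F u v.
Proof.
  unfold cont2. induction 1; intros u v.
  - apply continuous_const.
  - apply (continuous_comp fst sin). apply continuous_fst. apply cont_R; intros; auto_derive; auto.
  - apply (continuous_comp fst cos). apply continuous_fst. apply cont_R; intros; auto_derive; auto.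
  - apply (continuous_comp fst exp). apply continuous_fst. apply cont_R; intros; auto_derive; auto.
  - apply (continuous_comp fst (fun x => exp (-x))). apply continuous_fst. apply cont_R; intros; auto_derive; auto.
  - apply (continuous_comp snd sin). apply continuous_snd. apply cont_R; intros; auto_derive; auto.
  - apply (continuous_comp snd cos). apply continuous_snd. apply cont_R; intros; auto_derive; auto.
  - apply (continuous_comp snd exp). apply continuous_snd. apply cont_R; intros; auto_derive; auto.
  - apply (continuous_comp snd (fun x => exp (-x))). apply continuous_snd. apply cont_R; intros; auto_derive; auto.
  - apply (continuous_plus (fun p : R * R => F (fst p) (snd p)) (fun p : R * R => G (fst p) (snd p))); auto.
  - apply (continuous_mult (fun p : R * R => F (fst p) (snd p)) (fun p : R * R => G (fst p) (snd p))); auto.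
Qed.

Lemma SP_C1 Om F : SP F -> C1_on Om F.
Proof.
  intros H u v _. destruct (SP_du F H) as [G1 [S1 D1]]. destruct (SP_dv F H) as [G2 [S2 D2]].
  split; [exists (G1 u v); auto|]. split; [exists (G2 u v); auto|].
  split; [apply SP_cont; auto|]. split; apply SP_cont; [apply SP_Pu|apply SP_Pv]; auto.
Qed.
Lemma SP_C2 Om F : SP F -> C2_on Om F.
Proof. intro H. split; [|split]; apply SP_C1; [|apply SP_Pu|apply SP_Pv]; auto. Qed.
Ltac dtac := intros; unfold sinh, cosh; auto_derive; [auto | field].

Lemma Mu th : Pu (Mth th) = fun u v => cos th*(cosh u * sin u + sinh u * cos u) + sin th * sin u * cos v.
Proof. apply Pu_eq. unfold Mth. dtac. Qed.
Lemma Mv th : Pv (Mth th) = fun u v => sin th * cos u * sin v.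
Proof. apply Pv_eq. unfold Mth. dtac. Qed.
Lemma Muu th : Pu (Pu (Mth th)) = fun u v => 2*cos th*cosh u*cos u + sin th * cos u * cos v.
Proof. rewrite Mu. apply Pu_eq. dtac. Qed.
Lemma Mvv th : Pv (Pv (Mth th)) = fun u v => sin th * cos u * cos v.
Proof. rewrite Mv. apply Pv_eq. dtac. Qed.
Lemma Muv th : Pu (Pv (Mth th)) = fun u v => - sin th * sin u * sin v.
Proof. rewrite Mv. apply Pu_eq. dtac. Qed.
Lemma Mvu th : Pv (Pu (Mth th)) = fun u v => - sin th * sin u * sin v.
Proof. rewrite Mu. apply Pv_eq. dtac. Qed.

Lemma Nu th : Pu (Nth th) = fun u v => exp v * cos th * sinh u.
Proof. apply Pu_eq. unfold Nth. dtac. Qed.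
Lemma Nv th : Pv (Nth th) = fun u v => exp v * (cos th * cosh u + sin th * sin v + sin th * cos v).
Proof. apply Pv_eq. unfold Nth. dtac. Qed.
Lemma Nuu th : Pu (Pu (Nth th)) = fun u v => exp v * cos th * cosh u.
Proof. rewrite Nu. apply Pu_eq. dtac. Qed.
Lemma Nvv th : Pv (Pv (Nth th)) = fun u v => exp v * (cos th * cosh u + 2 * sin th * cos v).
Proof. rewrite Nv. apply Pv_eq. dtac. Qed.
Lemma Nuv th : Pu (Pv (Nth th)) = fun u v => exp v * cos th * sinh u.
Proof. rewrite Nv. apply Pu_eq. dtac. Qed.
Lemma Nvu th : Pv (Pu (Nth th)) = fun u v => exp v * cos th * sinh u.
Proof. rewrite Nu. apply Pv_eq. dtac. Qed.

Lemma hRu : Pu (fun a b => Re (hfun a b)) = fun u v => - exp (-v) * sin u.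
Proof. apply Pu_eq. unfold hfun; simpl. dtac. Qed.
Lemma hIu : Pu (fun a b => Im (hfun a b)) = fun u v => exp (-v) * cos u.
Proof. apply Pu_eq. unfold hfun; simpl. dtac. Qed.
Lemma hRv : Pv (fun a b => Re (hfun a b)) = fun u v => - exp (-v) * cos u.
Proof. apply Pv_eq. unfold hfun; simpl. dtac. Qed.
Lemma hIv : Pv (fun a b => Im (hfun a b)) = fun u v => - exp (-v) * sin u.
Proof. apply Pv_eq. unfold hfun; simpl. dtac. Qed.

Definition XU th (i : nat) u v := match i with
  | 0%nat => cos th*(cosh u * sin u + sinh u * cos u) + sin th * sin u * cos v
  | 1%nat => cos th*(cosh u * cos u - sinh u * sin u) + sin th * cos u * cos v
  | 2%nat => cos th * sinh u * sinh v
  | _ => cos th * sinh u * cosh v end.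
Definition XV th (i : nat) u v := match i with
  | 0%nat => sin th * cos u * sin v
  | 1%nat => - sin th * sin u * sin v
  | 2%nat => cos th * cosh u * cosh v + sin th * (sinh v * sin v + cosh v * cos v)
  | _ => cos th * cosh u * sinh v + sin th * (cosh v * sin v + sinh v * cos v) end.
Definition XUU th (i : nat) u v := match i with
  | 0%nat => 2 * cos th * cosh u * cos u + sin th * cos u * cos v
  | 1%nat => - 2 * cos th * cosh u * sin u - sin th * sin u * cos v
  | 2%nat => cos th * cosh u * sinh v
  | _ => cos th * cosh u * cosh v end.
Definition XVV th (i : nat) u v := match i with
  | 0%nat => sin th * cos u * cos v
  | 1%nat => - sin th * sin u * cos v
  | 2%nat => cos th * cosh u * sinh v + 2 * sin th * sinh v * cos v
  | _ => cos th * cosh u * cosh v + 2 * sin th * cosh v * cos v end.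

Lemma Xu_eq th i : Pu (Xth th i) = XU th i.
Proof. apply Pu_eq. unfold Xth, X0, Xpi2, XU. destruct i as [|[|[|i]]]; dtac. Qed.
Lemma Xv_eq th i : Pv (Xth th i) = XV th i.
Proof. apply Pv_eq. unfold Xth, X0, Xpi2, XV. destruct i as [|[|[|i]]]; dtac. Qed.
Lemma Xuu_eq th i : Pu (Pu (Xth th i)) = XUU th i.
Proof. rewrite Xu_eq. apply Pu_eq. unfold XU, XUU. destruct i as [|[|[|i]]]; dtac. Qed.
Lemma Xvv_eq th i : Pv (Pv (Xth th i)) = XVV th i.
Proof. rewrite Xv_eq. apply Pv_eq. unfold XV, XVV. destruct i as [|[|[|i]]]; dtac. Qed.
Lemma Pu_scal k g u v : Pu (fun a b => k * g a b) u v = k * Pu g u v.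
Proof. unfold Pu. apply Derive_scal. Qed.
Lemma Pv_scal k g u v : Pv (fun a b => k * g a b) u v = k * Pv g u v.
Proof. unfold Pv. apply Derive_scal. Qed.

Ltac cpair := apply injective_projections; simpl.

Lemma Dz_lift f u v : Dz (liftR f) u v = (/2 * Pu f u v, - (/2 * Pv f u v)).
Proof.
  unfold Dz, CDu, CDv, liftR. unfold Pu at 2, Pv at 2. simpl. rewrite !Derive_const.
  change (Pu (fun a b => f a b)) with (Pu f). change (Pv (fun a b => f a b)) with (Pv f).
  cpair; field.
Qed.
Lemma Dzb_lift f u v : Dzb (liftR f) u v = (/2 * Pu f u v, /2 * Pv f u v).
Proof.
  unfold Dzb, CDu, CDv, liftR. unfold Pu at 2, Pv at 2. simpl. rewrite !Derive_const.
  change (Pu (fun a b => f a b)) with (Pu f). change (Pv (fun a b => f a b)) with (Pv f).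
  cpair; field.
Qed.
Lemma DzDzb f u v : Dz (Dzb (liftR f)) u v =
  (/4 * (Pu (Pu f) u v + Pv (Pv f) u v), /4 * (Pu (Pv f) u v - Pv (Pu f) u v)).
Proof.
  assert (E1 : (fun a b => Re (Dzb (liftR f) a b)) = fun a b => /2 * Pu f a b).
  { do 2 (apply functional_extensionality; intro). rewrite Dzb_lift. reflexivity. }
  assert (E2 : (fun a b => Im (Dzb (liftR f) a b)) = fun a b => /2 * Pv f a b).
  { do 2 (apply functional_extensionality; intro). rewrite Dzb_lift. reflexivity. }
  unfold Dz, CDu, CDv. rewrite E1, E2, !Pu_scal, !Pv_scal. cpair; field.
Qed.
From Stdlib Require Import Lia.
Lemma pyth x : sin x ^ 2 + cos x ^ 2 = 1.
Proof. rewrite <- (sin2_cos2 x). unfold Rsqr. ring. Qed.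
Lemma hypr x : cosh x ^ 2 - sinh x ^ 2 = 1.
Proof. unfold cosh, sinh. rewrite exp_Ropp. field. apply exp_neq_0. Qed.
Lemma cosh_gt x : 0 < cosh x.
Proof. unfold cosh. generalize (exp_pos x) (exp_pos (-x)). lra. Qed.

Ltac ex0 := rewrite ?exp_Ropp; field; repeat split; try apply exp_neq_0.

Ltac trp X := transitivity X;
  [ rewrite pyth; unfold sinh, cosh; ex0 | unfold sinh, cosh; ex0 ].

Theorem mainTheorem11 (th : R) (Om : R * R -> Prop) :
  0 <= th <= PI / 2 ->
  open Om ->
  simply_connected Om ->
  (forall u v, Om (u, v) -> cos th * cosh u + sin th * cos v <> 0) ->
  (* (i) *)
  weierstrass_data_2 Om hfun (Mth th) (Nth th) /\
  (* (ii) *)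
  (forall u v, Om (u, v) -> forall i, (i < 4)%nat ->
     Dz (liftR (Xth th i)) u v =
       (Dz (liftR (Mth th)) u v * Ecoef (hfun u v) i
        + Dz (liftR (Nth th)) u v * Fcoef (hfun u v) i)%C) /\
  conformal_spacelike_immersion Om (Xth th) (Lam_th th) /\
  (* (iii) *)
  (forall u v, Om (u, v) ->
     lor (mean_curv (Xth th) (Lam_th th) u v) (mean_curv (Xth th) (Lam_th th) u v) = 0 /\
     exists i, (i < 4)%nat /\ mean_curv (Xth th) (Lam_th th) u v i <> 0) /\
  (* (iv) *)
  (forall u v, Om (u, v) ->
     lor (fun i => Xth th i u v) (fun i => Xth th i u v) = - cos (2 * th)).
Proof.
  intros _ _ _ HL.
  split; [|split; [|split; [|split]]].
  -
    split; [|split; [|split]].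
    + split; apply SP_C2; unfold hfun; simpl; sp.
    + apply SP_C2; unfold Mth; sp.
    + apply SP_C2; unfold Nth; sp.
    + intros u v Huv. split; [|split; [|split]].
      * intro H. assert (H1 := f_equal fst H). assert (H2 := f_equal snd H). simpl in H1, H2.
        assert (ep := exp_pos (-v)).
        assert (cos u = 0) by (apply (Rmult_eq_reg_l (exp (-v))); lra).
        assert (sin u = 0) by (apply (Rmult_eq_reg_l (exp (-v))); lra).
        generalize (pyth u). rewrite H0, H3. simpl. lra.
      * unfold Dzb, CDu, CDv. rewrite hRu, hIu, hRv, hIv. cpair; field.
      * rewrite !DzDzb, Muu, Mvv, Muv, Mvu, Nuu, Nvv, Nuv, Nvu. unfold hfun. cpair; ex0.
      * rewrite !Dz_lift, Mu, Mv, Nu, Nv. intro H.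
        assert (H1 := f_equal fst H). assert (H2 := f_equal snd H). simpl in H1, H2.
        set (L := cos th * cosh u + sin th * cos v).
        assert (E1 : L * sin u = 0).
        { match type of H1 with ?a = _ => transitivity (2*a); [unfold L, sinh, cosh; ex0 | rewrite H1; simpl; ring] end. }
        assert (E2 : L * cos u = 0).
        { match type of H2 with ?a = _ => transitivity (2*a); [unfold L, sinh, cosh; ex0 | rewrite H2; simpl; ring] end. }
        assert (HL' := HL u v Huv). fold L in HL'.
        assert (sin u = 0) by (apply (Rmult_eq_reg_l L); lra).
        assert (cos u = 0) by (apply (Rmult_eq_reg_l L); lra).
        generalize (pyth u). rewrite H0, H3. simpl. lra.
  -
    intros u v Huv i Hi. rewrite !Dz_lift, Xu_eq, Xv_eq, Mu, Mv, Nu, Nv.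
    destruct i as [|[|[|[|i]]]]; [| | | | exfalso; lia];
      unfold XU, XV, Ecoef, Fcoef, hfun; cpair;
      [ unfold sinh, cosh; ex0 .. | trp ((exp v * cos th * sinh u / 4) - (exp (-v) / 4 * (cos th * sinh u) * (sin u ^ 2 + cos u ^ 2))) | trp ((- (exp v * (cos th * cosh u + sin th * sin v + sin th * cos v)) / 4) - (exp (-v) / 4 * (cos th * cosh u + sin th * cos v - sin th * sin v) * (sin u ^ 2 + cos u ^ 2))) | trp ((exp v * cos th * sinh u / 4) + (exp (-v) / 4 * (cos th * sinh u) * (sin u ^ 2 + cos u ^ 2))) | trp ((- (exp v * (cos th * cosh u + sin th * sin v + sin th * cos v)) / 4) + (exp (-v) / 4 * (cos th * cosh u + sin th * cos v - sin th * sin v) * (sin u ^ 2 + cos u ^ 2))) ].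

  -
    split.
    + intros i Hi. apply SP_C2. unfold Xth, X0, Xpi2.
      destruct i as [|[|[|[|i]]]]; [| | | | exfalso; lia]; sp.
    + intros u v Huv. assert (HL' := HL u v Huv).
      unfold lor, Xu, Xv. cbv beta. rewrite !Xu_eq, !Xv_eq. unfold XU, XV, Lam_th. cbv beta iota.
      split; [|split; [|split]].
      * assert (P := Rsqr_pos_lt _ HL'). unfold Rsqr in P. nra.
      * transitivity (((cos th*cosh u + sin th*cos v)^2 + cos th^2*sinh u^2)*(sin u^2+cos u^2)
          - cos th^2*sinh u^2*(cosh v^2-sinh v^2)); [ring| rewrite !pyth, !hypr; ring].
      * transitivity (sin th^2*sin v^2*(sin u^2+cos u^2) + (cosh v^2-sinh v^2)*((cos th*cosh u+sin th*cos v)^2 - sin th^2*sin v^2));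
          [ring| rewrite !pyth, !hypr; ring].
      * transitivity (cos th*sin th*sinh u*sin v*(sin u^2+cos u^2) - cos th*sin th*sinh u*sin v*(cosh v^2-sinh v^2));
          [ring| rewrite !pyth, !hypr; ring].
  -
    intros u v Huv. assert (HL' := HL u v Huv).
    assert (Lp : Lam_th th u v <> 0).
    { unfold Lam_th. assert (P := Rsqr_pos_lt _ HL'). unfold Rsqr in P. nra. }
    unfold mean_curv, lor. cbv beta. rewrite !Xuu_eq, !Xvv_eq. unfold XUU, XVV. cbv beta iota.
    set (Li := / Lam_th th u v). split.
    + transitivity (Li^2 * (2*(cos th*cosh u + sin th*cos v))^2 * ((sin u^2+cos u^2) - (cosh v^2 - sinh v^2)));
        [ring| rewrite !pyth, !hypr; ring].
    + exists 3%nat. split; [lia|]. rewrite Xuu_eq, Xvv_eq. unfold XUU, XVV. cbv beta iota.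
      replace (cos th * cosh u * cosh v + (cos th * cosh u * cosh v + 2 * sin th * cosh v * cos v))
        with (2 * (cos th * cosh u + sin th * cos v) * cosh v) by ring.
      assert (cosh v <> 0) by (apply Rgt_not_eq, cosh_gt).
      assert (Li <> 0) by (apply Rinv_neq_0_compat; auto).
      apply Rmult_integral_contrapositive_currified; [auto|].
      apply Rmult_integral_contrapositive_currified; [|auto].
      apply Rmult_integral_contrapositive_currified; [lra|auto].
  -
    intros u v Huv. unfold lor, Xth, X0, Xpi2. cbv beta iota.
    transitivity (cos th^2*sinh u^2*(sin u^2+cos u^2) + sin th^2*cos v^2*(sin u^2+cos u^2)
       - cos th^2*cosh u^2*(cosh v^2-sinh v^2) + sin th^2*sin v^2*(cosh v^2-sinh v^2)); [ring|].
    rewrite !pyth, !hypr, cos_2a.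
    transitivity (-cos th^2*(cosh u^2-sinh u^2) + sin th^2*(sin v^2+cos v^2)); [ring|].
    rewrite !pyth, !hypr; ring.
Qed.
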